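(* Let $G$ be a scheduling game on $m\ge2$ identical machines of speed $1$ with a global priority list, in which every job $i$ has negative deterioration $p_i(t)=\max\{\tau_i,b_i-a_it\}$ with $0\le a_i\le1$ (all jobs delay-averse). Then every pure Nash equilibrium $\sigma$ of $G$ satisfies $C_{\max}(\sigma)\le\left(3-\frac2m\right)OPT(G)$; i.e., $PoA({\cal G}^{-DA}_{PGlobal})\le 3-\frac2m$.
   Context: Scheduling game: a finite set $N$ of $n$ jobs (players) and a set $M$ of $m$ machines; machine $j$ has speed $s_j>0$. With a global priority list, all machines share the same bijection $\pi:N\to\{1,\dots,n\}$, and job $u$ has higher priority than $v$ iff $\pi(u)<\pi(v)$. Negative deterioration: $p_i(t)=\max\{\tau_i,b_i-a_it\}$ with $b_i,a_i\ge0$, $\tau_i>0$. A profile $\sigma\in M^N$ assigns each job to a machine. On machine $j$, the jobs assigned to it, listed in increasing $\pi$-order as $i_1,i_2,\dots$, are processed without idle time: $S_{i_1}(\sigma)=0$, $C_{i_k}(\sigma)=S_{i_k}(\sigma)+p_{i_k}(S_{i_k}(\sigma))/s_j$, $S_{i_{k+1}}(\sigma)=C_{i_k}(\sigma)$. The cost of job $i$ is $C_i(\sigma)$. A pure Nash equilibrium (NE) is a profile in which no job can strictly decrease its completion time by unilaterally changing its machine. Makespan $C_{\max}(\sigma)=\max_iC_i(\sigma)$; $OPT(G)=\min_\sigma C_{\max}(\sigma)$ over all profiles. ${\cal G}^{-DA}_{PGlobal}$ denotes the class of all games described in the claim; its PoA is the supremum over its games of $\max_{\sigma\text{ NE}}C_{\max}(\sigma)/OPT(G)$.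 *)

(* Defs.v *)
From mathcomp Require Import all_boot all_order all_algebra.
From mathcomp Require Import perm.
Set Implicit Arguments. Unset Strict Implicit. Unset Printing Implicit Defensive.
Import Order.TTheory GRing.Theory Num.Theory.
Local Open Scope ring_scope.

Section Sched.
Variables (R : realFieldType) (n m : nat).
Variables (tau b a : 'I_n -> R) (speed : 'I_m -> R) (pi : {perm 'I_n}).

Definition ptime (i : 'I_n) (t : R) : R := Num.max (tau i) (b i - a i * t).

Definition profile := 'I_n -> 'I_m.

Definition jobs_on (s : profile) (j : 'I_m) : seq 'I_n :=
  sort (fun u v => (pi u <= pi v)%N) [seq k <- enum 'I_n | s k == j].

Definition finish (sp : R) (l : seq 'I_n) : R :=
  foldl (fun t k => t + ptime k t / sp) 0 l.

Definition completion (s : profile) (i : 'I_n) : R :=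
  let L := jobs_on s (s i) in finish (speed (s i)) (take (index i L).+1 L).

Definition makespan (s : profile) : R :=
  \big[Num.max/0]_(i < n) completion s i.

Definition deviate (s : profile) (i : 'I_n) (j : 'I_m) : profile :=
  fun k => if k == i then j else s k.

Definition is_NE (s : profile) : Prop :=
  forall (i : 'I_n) (j : 'I_m), completion s i <= completion (deviate s i j) i.

End Sched.

(* Main.v *)
Require Import Defs.
From mathcomp Require Import all_boot all_order all_algebra.
From mathcomp Require Import perm.
Import Order.TTheory GRing.Theory Num.Theory.
Set Implicit Arguments. Unset Strict Implicit. Unset Printing Implicit Defensive.
Local Open Scope ring_scope.

Definition lepi n (pi : {perm 'I_n}) : rel 'I_n := fun u v => (pi u <= pi v)%N.

Lemma lepi_trans n (pi : {perm 'I_n}) : transitive (lepi pi).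
Proof. by move=> x y z; rewrite /lepi; apply: leq_trans. Qed.
Lemma lepi_total n (pi : {perm 'I_n}) : total (lepi pi).
Proof. by move=> x y; rewrite /lepi leq_total. Qed.
Lemma lepi_anti n (pi : {perm 'I_n}) : antisymmetric (lepi pi).
Proof.
move=> x y /andP[h1 h2]; apply: (perm_inj (s:=pi)); apply: val_inj => /=.
by apply/eqP; rewrite eqn_leq; apply/andP; split.
Qed.

Definition Lst n m (pi : {perm 'I_n}) (s : profile n m) (j : 'I_m) (r : nat) :=
  sort (lepi pi) [seq u <- enum 'I_n | (s u == j) && (pi u < r)%N].

Lemma Lst_uniq n m pi (s : profile n m) j r : uniq (Lst pi s j r).
Proof. by rewrite sort_uniq filter_uniq // enum_uniq. Qed.

Lemma mem_Lst n m pi (s : profile n m) j r u :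
  (u \in Lst pi s j r) = (s u == j) && (pi u < r)%N.
Proof. by rewrite mem_sort mem_filter mem_enum andbT. Qed.

Lemma Lst_sorted n m pi (s : profile n m) j r : sorted (lepi pi) (Lst pi s j r).
Proof. exact: (sort_sorted (@lepi_total _ pi)). Qed.

Lemma Lst0 n m pi (s : profile n m) j : Lst pi s j 0 = [::].
Proof.
rewrite /Lst (@eq_filter _ _ pred0); first by rewrite filter_pred0.
by move=> u; rewrite ltn0 andbF.
Qed.

Lemma sorted_rcons' n (pi : {perm 'I_n}) (l : seq 'I_n) x :
  sorted (lepi pi) l -> all (fun y => lepi pi y x) l -> sorted (lepi pi) (rcons l x).
Proof.
move=> hs ha; rewrite (sorted_pairwise (@lepi_trans _ pi)) -cats1 pairwise_cat.
rewrite -(sorted_pairwise (@lepi_trans _ pi)) hs /= andbT.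
by rewrite allrel1r.
Qed.

Lemma LstS n m pi (s : profile n m) j r (hr : (r < n)%N) :
  let u0 := (((pi^-1)%g : {perm 'I_n}) (Ordinal hr)) in
  Lst pi s j r.+1 = if s u0 == j then rcons (Lst pi s j r) u0 else Lst pi s j r.
Proof.
move=> u0.
have hpu0 : pi u0 = Ordinal hr by rewrite /u0 permKV.
have hpu0' : (pi u0 : nat) = r by rewrite hpu0.
apply: (@sorted_eq _ (lepi pi) (@lepi_trans _ pi) (@lepi_anti _ pi)).
- exact: Lst_sorted.
- case: ifP => _; last exact: Lst_sorted.
  apply: sorted_rcons'; first exact: Lst_sorted.
  apply/allP => y; rewrite mem_Lst => /andP[_ hy]; rewrite /lepi hpu0'.
  exact: ltnW.
- apply: uniq_perm; first exact: Lst_uniq.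
    case: ifP => hj; last exact: Lst_uniq.
    rewrite rcons_uniq Lst_uniq andbT mem_Lst hpu0' ltnn andbF //.
  move=> u; rewrite mem_Lst ltnS leq_eqVlt.
  case: ifP => hj; rewrite ?mem_rcons ?in_cons mem_Lst.
    case: (eqVneq u u0) => [->|hne] /=; first by rewrite hj hpu0' eqxx.
    have : (pi u : nat) != r.
      by rewrite -hpu0'; apply: contra hne => /eqP h; apply/eqP/(perm_inj (s:=pi))/val_inj.
    by move/negbTE => ->.
  case: (eqVneq u u0) => [->|hne] /=; first by rewrite hj.
  have : (pi u : nat) != r.
    by rewrite -hpu0'; apply: contra hne => /eqP h; apply/eqP/(perm_inj (s:=pi))/val_inj.
  by move/negbTE => ->.
Qed.

Lemma take_index_sorted n (pi : {perm 'I_n}) (L : seq 'I_n) i :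
  sorted (lepi pi) L -> uniq L -> i \in L ->
  take (index i L).+1 L = [seq u <- L | (pi u <= pi i)%N].
Proof.
elim: L => [//|x L IH] hs /andP[hx hu] hi.
have hsL : sorted (lepi pi) L by move: hs; rewrite /=; apply: path_sorted.
have hall : all (lepi pi x) L.
  by move: hs; rewrite /= (path_sortedE (@lepi_trans _ pi)) => /andP[].
rewrite /=; case: (eqVneq x i) => [ex|hne].
  rewrite -ex leqnn take0; congr (_ :: _).
  rewrite (@eq_in_filter _ _ pred0); first by rewrite filter_pred0.
  move=> u hu'; apply/negbTE; rewrite -ltnNge ltn_neqAle.
  move/allP: hall => /(_ u hu'); rewrite /lepi => ->; rewrite andbT.
  apply: contra hx => /eqP h.
  have -> : x = u by apply: (perm_inj (s:=pi)); apply: val_inj.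
  exact: hu'.
have hiL : i \in L by move: hi; rewrite in_cons eq_sym (negbTE hne).
have -> : (pi x <= pi i)%N by move/allP: hall => /(_ i hiL).
by rewrite /= IH.
Qed.

Definition gg (R : realFieldType) n (tau b a : 'I_n -> R) i (t : R) := t + ptime tau b a i t / 1.
Definition Ld (R : realFieldType) n m (tau b a : 'I_n -> R) (pi : {perm 'I_n}) (s : profile n m) j r :=
  finish tau b a 1 (Lst pi s j r).

Lemma LstSi n m pi (s : profile n m) j (i : 'I_n) :
  Lst pi s j (pi i).+1 = if s i == j then rcons (Lst pi s j (pi i)) i else Lst pi s j (pi i).
Proof.
have := LstS pi s j (ltn_ord (pi i)) => /=.
have -> : ((pi^-1)%g : {perm 'I_n}) (Ordinal (ltn_ord (pi i))) = i.
  by rewrite (_ : Ordinal _ = pi i) ?permK //; apply: val_inj.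
by [].
Qed.

Lemma LdSi (R : realFieldType) n m (tau b a : 'I_n -> R) pi (s : profile n m) j (i : 'I_n) :
  Ld tau b a pi s j (pi i).+1 =
  if s i == j then gg tau b a i (Ld tau b a pi s j (pi i)) else Ld tau b a pi s j (pi i).
Proof.
rewrite /Ld LstSi; case: ifP => // _.
by rewrite /finish foldl_rcons.
Qed.

Lemma Ld0 (R : realFieldType) n m (tau b a : 'I_n -> R) pi (s : profile n m) j : Ld tau b a pi s j 0 = 0.
Proof. by rewrite /Ld Lst0. Qed.

Lemma completionE (R : realFieldType) n m (tau b a : 'I_n -> R) pi (s : profile n m) i :
  completion tau b a (fun _ => 1) pi s i = gg tau b a i (Ld tau b a pi s (s i) (pi i)).
Proof.
rewrite /completion.
have hj : jobs_on pi s (s i) = Lst pi s (s i) n.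
  rewrite /jobs_on /Lst; congr sort; apply: eq_filter => u.
  by rewrite ltn_ord andbT.
rewrite hj (@take_index_sorted _ pi) ?Lst_sorted ?Lst_uniq ?mem_Lst ?eqxx ?ltn_ord //.
have -> : [seq u <- Lst pi s (s i) n | (pi u <= pi i)%N] = Lst pi s (s i) (pi i).+1.
  rewrite /Lst filter_sort; [|exact: lepi_total|exact: lepi_trans].
  rewrite -filter_predI; congr sort; apply: eq_filter => u /=.
  by rewrite ltn_ord ltnS andbT andbC.
by rewrite LstSi eqxx /finish foldl_rcons.
Qed.

Lemma Ld_deviate (R : realFieldType) n m (tau b a : 'I_n -> R) pi (s : profile n m) k j' j :
  Ld tau b a pi (deviate s k j') j (pi k) = Ld tau b a pi s j (pi k).
Proof.
rewrite /Ld /Lst; congr (finish _ _ _ _ (sort _ _)); apply: eq_filter => u.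
rewrite /deviate; case: (eqVneq u k) => [->|//]; by rewrite ltnn !andbF.
Qed.

From mathcomp Require Import lra ring.


Lemma maxE' (R : realFieldType) (x y : R) : Num.max x y = if x <= y then y else x.
Proof. by rewrite maxEle. Qed.

Lemma step_ineq (R : realFieldType) (x p th th' gx gp : R) :
  th <= th' -> th' <= Num.max th gp -> gp <= th' -> p <= th -> p <= gp -> x <= gx ->
  (p <= x -> gx - x <= gp - p) -> (x <= p -> gx <= gp) ->
  Num.max (gx - th') 0 - Num.max (x - th) 0 + th' - th - (gp - p) <= 0.
Proof.
move=> h1 h2 h3 h4 h5 h6 h7 h8.
rewrite !maxE' in h2 *.
case: (lerP p x) => hpx.
  have := h7 hpx => h7'.
  move: h2; case: ifP => hq h2; case: ifP => hq1; case: ifP => hq2; lra.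
have := h8 (ltW hpx) => h8'.
move: h2; case: ifP => hq h2; case: ifP => hq1; case: ifP => hq2; lra.
Qed.

Lemma ptime_ge (R : realFieldType) n (tau b a : 'I_n -> R) i t : tau i <= ptime tau b a i t.
Proof. by rewrite /ptime le_max lexx. Qed.

Lemma ptime_anti (R : realFieldType) n (tau b a : 'I_n -> R) i x y :
  0 <= a i -> x <= y -> ptime tau b a i y <= ptime tau b a i x.
Proof.
move=> ha hxy; rewrite /ptime !maxE'.
have : a i * x <= a i * y by apply: ler_wpM2l.
case: ifP => h1; case: ifP => h2; lra.
Qed.

Lemma gg_ge (R : realFieldType) n (tau b a : 'I_n -> R) i x :
  0 < tau i -> x <= gg tau b a i x.
Proof.
move=> ht; rewrite /gg divr1; have := @ptime_ge _ _ tau b a i x; lra.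
Qed.

Lemma gg_lip (R : realFieldType) n (tau b a : 'I_n -> R) i x y :
  0 <= a i -> x <= y -> gg tau b a i y - y <= gg tau b a i x - x.
Proof.
move=> ha hxy; rewrite /gg !divr1; have := @ptime_anti _ _ tau b a i x y ha hxy; lra.
Qed.

Lemma gg_mono (R : realFieldType) n (tau b a : 'I_n -> R) i x y :
  a i <= 1 -> x <= y -> gg tau b a i x <= gg tau b a i y.
Proof.
move=> ha hxy; rewrite /gg !divr1 /ptime !maxE'.
have : (1 - a i) * x <= (1 - a i) * y by apply: ler_wpM2l; lra.
case: ifP => h1; case: ifP => h2; lra.
Qed.

Definition thm (R : realFieldType) m (P : 'I_m -> R) := \big[Num.max/0]_j P j.
Definition Gf (R : realFieldType) m (N P : 'I_m -> R) :=
  \sum_j Num.max (N j - thm P) 0 + thm P - \sum_j P j.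

Lemma G_step (R : realFieldType) m (N N' P P' : 'I_m -> R) a0 b0 gx gp :
  (forall j, 0 <= P j) -> (forall j, j != a0 -> N' j = N j) -> N' a0 = gx ->
  (forall j, j != b0 -> P' j = P j) -> P' b0 = gp ->
  P b0 <= gp -> N a0 <= gx ->
  (P b0 <= N a0 -> gx - N a0 <= gp - P b0) -> (N a0 <= P b0 -> gx <= gp) ->
  Gf N' P' <= Gf N P.
Proof.
move=> hP0 hN hNa hP hPb hpg hxg h7 h8.
have hth0 : 0 <= thm P by apply: bigmax_ge_id.
have h1 : thm P <= thm P'.
  rewrite /thm; apply: bigmax_le; first exact: bigmax_ge_id.
  move=> j _; apply: le_trans (le_bigmax _ _ j).
  case: (eqVneq j b0) => [->|hj]; first by rewrite hPb.
  by rewrite hP.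
have h2 : thm P' <= Num.max (thm P) gp.
  rewrite {1}/thm; apply: bigmax_le; first by rewrite le_max hth0.
  move=> j _; case: (eqVneq j b0) => [->|hj]; first by rewrite hPb le_max lexx orbT.
  by rewrite hP // le_max (le_bigmax _ P j).
have h3 : gp <= thm P' by rewrite -hPb; apply: le_bigmax.
have h4 : P b0 <= thm P by apply: le_bigmax.
have := step_ineq h1 h2 h3 h4 hpg hxg h7 h8.
have e1 : \sum_j Num.max (N' j - thm P') 0 = Num.max (N' a0 - thm P') 0 + \sum_(j | j != a0) Num.max (N' j - thm P') 0 by rewrite (bigD1 a0).
have e2 : \sum_j Num.max (N j - thm P) 0 = Num.max (N a0 - thm P) 0 + \sum_(j | j != a0) Num.max (N j - thm P) 0 by rewrite (bigD1 a0).
have e3 : \sum_j P' j = P' b0 + \sum_(j | j != b0) P' j by rewrite (bigD1 b0).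
have e4 : \sum_j P j = P b0 + \sum_(j | j != b0) P j by rewrite (bigD1 b0).
rewrite /Gf e1 e2 e3 e4.
have hs1 : \sum_(i | i != a0) Num.max (N' i - thm P') 0 <= \sum_(i | i != a0) Num.max (N i - thm P) 0.
  apply: ler_sum => j hj; rewrite hN // !maxE'.
  case: ifP => q1; case: ifP => q2; lra.
have hs2 : \sum_(i | i != b0) P' i = \sum_(i | i != b0) P i.
  by apply: eq_bigr => j hj; rewrite hP.
rewrite hNa hPb hs2; lra.
Qed.

Lemma Gf_zero (R : realFieldType) m (N P : 'I_m -> R) :
  (forall j, N j = 0) -> (forall j, P j = 0) -> Gf N P <= 0.
Proof.
move=> hN hP.
have h0 : thm P = 0.
  apply/le_anti; rewrite /thm bigmax_ge_id andbT; apply: bigmax_le => //.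
  by move=> j _; rewrite hP.
have s1 : \sum_j Num.max (N j - 0) 0 = 0 :> R.
  by apply: big1 => j _; rewrite hN subrr maxxx.
have s2 : \sum_j P j = 0 by apply: big1 => j _; rewrite hP.
by rewrite /Gf h0 s1 s2 !addr0 subr0.
Qed.

Lemma invariant (R : realFieldType) n m (tau b a : 'I_n -> R) (pi : {perm 'I_n})
  (htau : forall i, 0 < tau i) (ha0 : forall i, 0 <= a i) (ha1 : forall i, a i <= 1)
  (s s' : profile n m) r : (r <= n)%N ->
  (forall j, 0 <= Ld tau b a pi s' j r <= makespan tau b a (fun _ => 1) pi s') /\
  Gf (fun j => Ld tau b a pi s j r) (fun j => Ld tau b a pi s' j r) <= 0.
Proof.
elim: r => [|r IH] hr.
  split; last by apply: Gf_zero => j; rewrite Ld0.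
  by move=> j; rewrite Ld0 lexx /makespan bigmax_ge_id.
have hrn : (r < n)%N by [].
have [IH1 IH2] := IH (ltnW hrn).
set i := ((pi^-1)%g : {perm 'I_n}) (Ordinal hrn).
have e : (pi i : nat) = r by rewrite /i permKV.
rewrite -e in IH1 IH2 *.
split.
  move=> j; rewrite LdSi; case: (eqVneq (s' i) j) => [<-|_]; last exact: IH1.
  have /andP[h0 _] := IH1 (s' i).
  rewrite -completionE /makespan le_bigmax andbT.
  rewrite completionE; apply: le_trans h0 (gg_ge _ _ _ (htau i)).
apply: le_trans IH2.
apply: (@G_step _ _ _ _ _ _ (s i) (s' i) (gg tau b a i (Ld tau b a pi s (s i) (pi i)))
   (gg tau b a i (Ld tau b a pi s' (s' i) (pi i)))).
- by move=> j; have /andP[] := IH1 j.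
- by move=> j hj /=; rewrite LdSi eq_sym (negbTE hj).
- by rewrite /= LdSi eqxx.
- by move=> j hj /=; rewrite LdSi eq_sym (negbTE hj).
- by rewrite /= LdSi eqxx.
- exact: gg_ge.
- exact: gg_ge.
- move=> hle; exact: gg_lip.
- move=> hle; exact: gg_mono.
Qed.

Theorem theorem14 (R : realFieldType) (n m : nat) (hm : (2 <= m)%N)
  (tau b a : 'I_n -> R) (pi : {perm 'I_n})
  (htau : forall i, 0 < tau i) (hb : forall i, 0 <= b i)
  (ha0 : forall i, 0 <= a i) (ha1 : forall i, a i <= 1)
  (sigma : profile n m)
  (hNE : is_NE tau b a (fun _ : 'I_m => 1) pi sigma) :
  forall sigma' : profile n m,
    makespan tau b a (fun _ : 'I_m => 1) pi sigma
    <= (3 - 2 / m%:R) * makespan tau b a (fun _ : 'I_m => 1) pi sigma'.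
Proof.
move=> s'.
set O := makespan tau b a (fun _ : 'I_m => 1) pi s'.
have hO : 0 <= O by rewrite /O /makespan bigmax_ge_id.
set w : R := m%:R.
have hw : 2 <= w by rewrite /w (ler_nat R 2 m).
have hw0 : 0 < w by lra.
set q : R := 2 / w.
have hqw : q * w = 2 by rewrite /q mulrAC -mulrA divff ?mulr1 //; lra.
have hq1 : q <= 1.
  have : q * w <= 1 * w by rewrite hqw mul1r.
  by rewrite ler_pM2r.
have hq0 : 0 <= q by rewrite /q divr_ge0 //; lra.
rewrite /makespan; apply: bigmax_le.
  apply: mulr_ge0 => //; lra.
move=> k _.
set K := (pi k : nat).
set N := fun j => Ld tau b a pi sigma j K.
set P := fun j => Ld tau b a pi s' j K.
have [hP hG] := invariant b pi htau ha0 ha1 sigma s' (ltnW (ltn_ord (pi k))).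
have hNEj : forall j, completion tau b a (fun _ => 1) pi sigma k <= gg tau b a k (N j).
  move=> j; apply: le_trans (hNE k j) _.
  rewrite completionE /deviate eqxx -/(deviate sigma k j).
  by rewrite Ld_deviate.
have hm0 : (0 < m)%N by apply: leq_trans hm.
case: (@arg_minP _ _ _ (Ordinal hm0) xpredT N isT) => j0 _ hmin.
set T := N j0.
set b0 := s' k.
set L := P b0.
have hL : gg tau b a k L <= O.
  rewrite /L /P /b0 -completionE /O /makespan.
  exact: (le_bigmax _ (completion tau b a (fun=> 1) pi s') k).
set th := thm P.
have hth0 : 0 <= th by apply: bigmax_ge_id.
have hthO : th <= O.
  apply: bigmax_le => // j _; by have /andP[] := hP j.
have hLth : L <= th by apply: le_bigmax.
have hL0 : 0 <= L by have /andP[] := hP b0.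
have hS : w * Num.max (T - th) 0 <= \sum_j Num.max (N j - th) 0.
  have -> : w * Num.max (T - th) 0 = \sum_(j < m) Num.max (T - th) 0.
    by rewrite sumr_const card_ord /w mulr_natl.
  apply: ler_sum => j _; rewrite !maxE'.
  have := hmin j isT; rewrite /T => hj.
  case: ifP => q1; case: ifP => q2; lra.
have hSP : \sum_j P j + th <= w * th + L.
  have e1 : \sum_j P j = P b0 + \sum_(j | j != b0) P j by rewrite (bigD1 b0).
  have e2 : \sum_(j < m) th = th + \sum_(j | j != b0) th by rewrite (bigD1 b0).
  have e3 : \sum_(j < m) th = w * th by rewrite sumr_const card_ord /w mulr_natl.
  have : \sum_(j | j != b0) P j <= \sum_(j | j != b0) th.
    by apply: ler_sum => j _; apply: le_bigmax.
  rewrite -/L in e1; lra.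
have hG' : \sum_j Num.max (N j - th) 0 + th - \sum_j P j <= 0 by exact: hG.
have hgT : gg tau b a k T <= gg tau b a k L + Num.max (T - L) 0.
  rewrite maxE'; case: ifP => hTL.
    have hTL' : T <= L by lra.
    have := @gg_mono _ _ tau b a k T L (ha1 k) hTL'; lra.
  move/negbT: hTL; rewrite -ltNge => hTL.
  have hTL' : L <= T by lra.
  have := @gg_lip _ _ tau b a k L T (ha0 k) hTL'; lra.
have key : Num.max (T - L) 0 <= (2 - q) * O.
  rewrite maxE'; case: ifP => hTL.
    apply: mulr_ge0 => //; lra.
  case: (lerP T th) => hTth.
    have : q * O <= 1 * O by apply: ler_wpM2r.
    rewrite mulrBl mul1r; lra.
  have hmx : Num.max (T - th) 0 = T - th by rewrite maxE'; case: ifP => //; lra.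
  rewrite hmx in hS.
  have h1 : w * (T - L) <= w * ((2 - q) * O).
    have e : w * ((2 - q) * O) = 2 * w * O - 2 * O by rewrite -hqw; ring.
    rewrite e.
    have f1 : 0 <= (w - 1) * L by apply: mulr_ge0; lra.
    have f2 : 0 <= (2 * w - 2) * (O - th) by apply: mulr_ge0; lra.
    nra.
  by rewrite ler_pM2l in h1.
have := hNEj j0; rewrite -/T.
have -> : 3 - q = 1 + (2 - q) by lra.
rewrite mulrDl mul1r; lra.
Qed.
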